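(* Let $S$ be a $\mathcal{C}$-semigroup with $S\ne\mathcal{C}$ and genus $g$. Then $S$ is symmetric if and only if $2g=\mathcal{F}(S)$.
   Context: An integer cone $\mathcal{C}\subseteq\mathbb{N}^p$ is the set of integer points of a finitely generated rational cone in $\mathbb{Q}_{\ge0}^p$. A $\mathcal{C}$-semigroup is a subset $S\subseteq\mathcal{C}$ containing $0$, closed under addition, with $\mathcal{C}\setminus S$ finite; $\mathcal{H}(S)=\mathcal{C}\setminus S$, $g=g(S)=\#\mathcal{H}(S)$. A monomial order $\preceq$ on $\mathbb{N}^p$ is fixed (total order, compatible with addition, $\mathbf 0\preceq\mathbf c$ for all $\mathbf c$), and $F(S)=\max_\preceq\mathcal{H}(S)$. $\mathrm{PF}(S)=\{\mathbf x\in\mathcal{H}(S)\mid \mathbf x+(S\setminus\{0\})\subseteq S\}$; $S$ is symmetric if $\mathrm{PF}(S)=\{F(S)\}$. $\mathbf x\le_{\mathcal{C}}\mathbf y$ means $\mathbf y-\mathbf x\in\mathcal{C}$; $I_S(\mathbf n)=\{\mathbf s\in S\mid \mathbf s\le_{\mathcal{C}}\mathbf n\}$. The generalized Frobenius number is $\mathcal{F}(S)=\#I_S(F(S))+g(S)$. *)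

(* Defs.v *)
From mathcomp Require Import all_boot all_order all_algebra.
Set Implicit Arguments. Unset Strict Implicit. Unset Printing Implicit Defensive.
Import Order.TTheory GRing.Theory Num.Theory.

Definition vec (p : nat) := {ffun 'I_p -> nat}.
Definition vzero p : vec p := [ffun => 0%N].
Definition vadd p (x y : vec p) : vec p := [ffun i => (x i + y i)%N].

(* Integer cone: integer points of the rational cone in Q_{>=0}^p generated
   by the finite family [gens] of vectors of Q_{>=0}^p. *)
Definition rat_gens_nonneg p (gens : seq {ffun 'I_p -> rat}) : Prop :=
  forall g, g \in gens -> forall i, (0 <= g i)%R.

Definition in_int_cone p (gens : seq {ffun 'I_p -> rat}) (x : vec p) : Prop :=
  exists lam : seq rat, size lam = size gens /\ (forall l, l \in lam -> (0 <= l)%R) /\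
    forall i, ((x i)%:R = \sum_(j < size gens) lam`_j * (gens`_j) i)%R.

Definition is_C_semigroup p (C S : vec p -> Prop) (H : seq (vec p)) : Prop :=
  [/\ (forall x, S x -> C x),
      S (vzero p),
      (forall x y, S x -> S y -> S (vadd x y)),
      uniq H &
      (forall x, x \in H <-> (C x /\ ~ S x))].

Definition monomial_order p (le : vec p -> vec p -> Prop) : Prop :=
  (forall x, le x x) /\
  (forall x y, le x y -> le y x -> x = y) /\
  (forall x y z, le x y -> le y z -> le x z) /\
  (forall x y, le x y \/ le y x) /\
  (forall x y z, le x y -> le (vadd x z) (vadd y z)) /\
  (forall c, le (vzero p) c).

Definition is_Frobenius p (le : vec p -> vec p -> Prop) (H : seq (vec p)) (Fr : vec p) :=
  Fr \in H /\ forall h, h \in H -> le h Fr.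

Definition PF p (S : vec p -> Prop) (H : seq (vec p)) (x : vec p) : Prop :=
  x \in H /\ forall s, S s -> s <> vzero p -> S (vadd x s).

Definition C_symmetric p (S : vec p -> Prop) (H : seq (vec p)) (Fr : vec p) : Prop :=
  forall x, PF S H x <-> x = Fr.

Definition leC p (C : vec p -> Prop) (x y : vec p) : Prop :=
  exists d, C d /\ y = vadd x d.

Definition I_S p (C S : vec p -> Prop) (n : vec p) (s : vec p) : Prop :=
  S s /\ leC C s n.

Definition has_card (T : eqType) (P : T -> Prop) (k : nat) : Prop :=
  exists s : seq T, [/\ uniq s, size s = k & (forall x, x \in s <-> P x)].

(* Main.v *)
Require Import Defs.
From mathcomp Require Import all_boot all_order all_algebra.
From mathcomp Require Import zify.
From Stdlib Require Import Classical.
Set Implicit Arguments. Unset Strict Implicit.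
Import Order.TTheory GRing.Theory Num.Theory.

Section Aux.
Variable p : nat.

Definition vsub (x y : vec p) : vec p := [ffun i => (x i - y i)%N].
Definition vsum (x : vec p) : nat := (\sum_(i < p) x i)%N.

Lemma vaddC (x y : vec p) : vadd x y = vadd y x.
Proof. by apply/ffunP => i; rewrite !ffunE addnC. Qed.

Lemma vaddA (x y z : vec p) : vadd x (vadd y z) = vadd (vadd x y) z.
Proof. by apply/ffunP => i; rewrite !ffunE addnA. Qed.

Lemma vadd0 (x : vec p) : vadd x (vzero p) = x.
Proof. by apply/ffunP => i; rewrite !ffunE addn0. Qed.

Lemma vsub_add (x d : vec p) : vsub (vadd x d) x = d.
Proof. by apply/ffunP => i; rewrite !ffunE addKn. Qed.

Lemma vadd_inj (x y d : vec p) : vadd x d = vadd y d -> x = y.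
Proof.
move=> E; apply/ffunP => i; have := congr1 (fun f : vec p => f i) E.
by rewrite !ffunE => /eqP; rewrite eqn_add2r => /eqP.
Qed.

Lemma vadd_eq_self (x s : vec p) : vadd x s = x -> s = vzero p.
Proof.
move=> E; apply/ffunP => i; have := congr1 (fun f : vec p => f i) E.
rewrite !ffunE => /eqP; rewrite -{2}[x i]addn0 eqn_add2l => /eqP -> //.
Qed.

Lemma vsumD (x y : vec p) : vsum (vadd x y) = (vsum x + vsum y)%N.
Proof.
rewrite /vsum -big_split /=; apply: eq_bigr => i _; by rewrite ffunE.
Qed.

Lemma vsum_pos (t : vec p) : t <> vzero p -> (0 < vsum t)%N.
Proof.
move=> tn0; rewrite lt0n; apply/negP => /eqP/eqP.
rewrite sum_nat_eq0 => /forallP Ht; apply: tn0; apply/ffunP => i.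
by rewrite ffunE; apply/eqP; have := Ht i.
Qed.

Lemma cone_add (gens : seq {ffun 'I_p -> rat}) (x y : vec p) :
  in_int_cone gens x -> in_int_cone gens y -> in_int_cone gens (vadd x y).
Proof.
move=> [l1 [s1 [p1 e1]]] [l2 [s2 [p2 e2]]].
exists (mkseq (fun j => l1`_j + l2`_j)%R (size gens)); split; first by rewrite size_mkseq.
split.
  move=> l /mapP [j]; rewrite mem_iota add0n => /andP[_ jl] ->.
  apply: addr_ge0; [apply: p1 | apply: p2]; apply: mem_nth; by rewrite ?s1 ?s2.
move=> i; rewrite ffunE natrD e1 e2 -big_split /=; apply: eq_bigr => j _.
by rewrite nth_mkseq // mulrDl.
Qed.

End Aux.

Theorem mainTheorem6 (p : nat) (gens : seq {ffun 'I_p -> rat})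
  (le : vec p -> vec p -> Prop) (S : vec p -> Prop) (H : seq (vec p)) (Fr : vec p) :
  rat_gens_nonneg gens ->
  monomial_order le ->
  is_C_semigroup (in_int_cone gens) S H ->
  H <> [::] ->
  is_Frobenius le H Fr ->
  C_symmetric S H Fr <->
  exists k, has_card (I_S (in_int_cone gens) S Fr) k /\ (2 * size H = k + size H)%N.
Proof.
move=> _ [lrefl [lanti [ltrans [ltot [ladd l0]]]]] [SC S0 Sadd uH Hdef] _ [FrH Frmax].
set C := in_int_cone gens.
have FrnS : ~ S Fr by case: (proj1 (Hdef Fr) FrH).
have inj : forall t1 t2 d1 d2, Fr = vadd t1 d1 -> Fr = vadd t2 d2 ->
    vsub Fr t1 = vsub Fr t2 -> t1 = t2.
  move=> t1 t2 d1 d2 E1 E2; rewrite {1}E1 {1}E2 !vsub_add => Ed.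
  by apply: (@vadd_inj _ _ _ d1); rewrite -E1 Ed -E2.
split.
- move=> Hsym.
  set N := (\sum_(x <- H) vsum x)%N.
  have bnd : forall x, x \in H -> (vsum x <= N)%N.
    by move=> x xH; rewrite /N (big_rem x xH) /= leq_addr.
  have expf : forall n h, h \in H -> (N - vsum h <= n)%N ->
      exists s, S s /\ PF S H (vadd h s).
    elim=> [|n IH] h hH hn.
    + exists (vzero p); split => //; rewrite vadd0; split => // t St tn0.
      apply: NNPP => nS.
      have hC : C h by case: (proj1 (Hdef h) hH).
      have : vadd h t \in H by apply/Hdef; split => //; apply: cone_add => //; exact: SC.
      move/bnd; rewrite vsumD; have := vsum_pos tn0; lia.
    + case: (classic (PF S H h)) => [Ph|nPh].
        by exists (vzero p); rewrite vadd0.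
      apply: NNPP => Hno; apply: nPh; split => // t St tn0.
      apply: NNPP => nS; apply: Hno.
      have hC : C h by case: (proj1 (Hdef h) hH).
      have htH : vadd h t \in H by apply/Hdef; split => //; apply: cone_add => //; exact: SC.
      have [s [Ss Ps]] : exists s, S s /\ PF S H (vadd (vadd h t) s).
        apply: IH => //; move: (bnd _ htH); rewrite vsumD; have := vsum_pos tn0; lia.
      by exists (vadd t s); split; [exact: Sadd | rewrite vaddA].
  have decomp : forall h, h \in H -> exists s, S s /\ Fr = vadd h s.
    move=> h hH; have [s [Ss Ps]] := expf _ h hH (leqnn _).
    by exists s; split => //; apply/esym/(proj1 (Hsym _)).
  exists (size H); split; last by rewrite mul2n addnn -addnn.
  exists [seq vsub Fr h | h <- H]; split; first 2 last.
  + move=> x; split.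
    * move=> /mapP [h hH ->]; have [s [Ss E]] := decomp h hH.
      rewrite E vsub_add; split => //; exists h; split; last by rewrite vaddC.
      by case: (proj1 (Hdef h) hH).
    * move=> [Sx [d [Cd E]]]; apply/mapP; exists d; last by rewrite E vaddC vsub_add.
      apply/Hdef; split => // Sd; apply: FrnS; rewrite E; exact: Sadd.
  + rewrite map_inj_in_uniq // => h1 h2 h1H h2H.
    have [s1 [_ E1]] := decomp h1 h1H; have [s2 [_ E2]] := decomp h2 h2H.
    exact: inj E1 E2.
  + by rewrite size_map.
- move=> [k [[s [us ss ms]] ek]].
  have ekH : k = size H by lia.
  have dec : forall t, t \in s -> S t /\ exists d, C d /\ Fr = vadd t d.
    by move=> t /ms.
  have sub : {subset [seq vsub Fr t | t <- s] <= H}.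
    move=> x /mapP [t ts ->]; have [St [d [Cd E]]] := dec t ts.
    rewrite E vsub_add; apply/Hdef; split => // Sd; apply: FrnS; rewrite E; exact: Sadd.
  have uS : uniq [seq vsub Fr t | t <- s].
    rewrite map_inj_in_uniq // => t1 t2 t1s t2s.
    have [_ [d1 [_ E1]]] := dec t1 t1s; have [_ [d2 [_ E2]]] := dec t2 t2s.
    exact: inj E1 E2.
  have szle : (size H <= size [seq vsub Fr t | t <- s])%N by rewrite size_map ss ekH.
  have [_ eqH] := uniq_min_size uS sub szle.
  move=> x; split.
  + move=> [xH Px]; rewrite -eqH in xH; case/mapP: xH => t ts xe; subst x.
    have [St [d [Cd E]]] := dec t ts.
    have [->|tn0] := eqVneq t (vzero p).
      by apply/ffunP => i; rewrite !ffunE subn0.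
    have eq : vadd (vsub Fr t) t = Fr by rewrite {1}E vsub_add vaddC -E.
    exfalso; apply: FrnS; rewrite -eq; apply: Px => // e; by rewrite e eqxx in tn0.
  + move=> ->; split => // t St tn0; apply: NNPP => nS.
    have FrC : C Fr by case: (proj1 (Hdef Fr) FrH).
    have : vadd Fr t \in H by apply/Hdef; split => //; apply: cone_add => //; exact: SC.
    move/Frmax => le1.
    have le2 : le Fr (vadd Fr t).
      have := ladd _ _ Fr (l0 t); by rewrite vaddC vadd0 vaddC.
    by apply: tn0; apply: (@vadd_eq_self _ Fr); apply: lanti.
Qed.
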